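(* Let $x\in\mathbb{R}^d$ with success probabilities $\rho_i(x)>\tfrac12$ for all $i$, let $M\ge1$, $l=\lfloor\frac{M+1}2\rfloor$, and $\rho(x):=\min_{1\le i\le d}\rho_i(x)$. Then $$\big(1-e^{-(2\rho(x)-1)^2l}\big)\|g(x)\|_1\le\|g(x)\|_{\rho_M}\le\|g(x)\|_1.$$
   Context: $g(x)\in\mathbb{R}^d$ is the gradient at $x$ and $\rho_i(x)\in(\tfrac12,1]$ are given numbers (success probabilities). $I(p;a,b)=\frac{\int_0^pt^{a-1}(1-t)^{b-1}dt}{\int_0^1t^{a-1}(1-t)^{b-1}dt}$ is the regularized incomplete beta function, and $\|g(x)\|_{\rho_M}:=\sum_{i=1}^d\big(2I(\rho_i(x);l,l)-1\big)|g_i(x)|$. *)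

(* Defs.v *)
From Stdlib Require Import Reals Lra Lia List.
Open Scope R_scope.

Definition beta_integrand (a b : nat) (t : R) : R :=
  t ^ (a - 1) * (1 - t) ^ (b - 1).

Lemma beta_integrand_continuous (a b : nat) : continuity (beta_integrand a b).
Proof.
  unfold beta_integrand. apply continuity_mult.
  - apply derivable_continuous, derivable_pow.
  - apply (continuity_comp (fun t => 1 - t) (fun u => u ^ (b - 1))).
    + apply continuity_minus; [apply continuity_const; intros x y; reflexivity | apply derivable_continuous, derivable_id].
    + apply derivable_continuous, derivable_pow.
Qed.

Lemma beta_integrable (a b : nat) (p : R) :
  Riemann_integrable (beta_integrand a b) 0 p.
Proof.
  destruct (Rle_dec 0 p) as [H|H].
  - apply continuity_implies_RiemannInt; [exact H|].
    intros x _; apply beta_integrand_continuous.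
  - apply RiemannInt_P1, continuity_implies_RiemannInt; [lra|].
    intros x _; apply beta_integrand_continuous.
Qed.

Definition beta_inc (a b : nat) (p : R) : R := RiemannInt (beta_integrable a b p).

Definition reg_inc_beta (p : R) (a b : nat) : R := beta_inc a b p / beta_inc a b 1.

Definition fsum (d : nat) (f : nat -> R) : R :=
  fold_right (fun i acc => f i + acc) 0 (seq 0 d).

Definition norm1 (d : nat) (v : nat -> R) : R := fsum d (fun i => Rabs (v i)).

Definition lfloor (M : nat) : nat := ((M + 1) / 2)%nat.

Definition norm_rhoM (d M : nat) (rho : nat -> R) (v : nat -> R) : R :=
  fsum d (fun i => (2 * reg_inc_beta (rho i) (lfloor M) (lfloor M) - 1) * Rabs (v i)).

(* rho = min_{0 <= i < d} rho_i  (only used with d >= 1) *)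
Definition rho_min (d : nat) (rho : nat -> R) : R :=
  match d with
  | O => 1
  | S d' => fold_right (fun i acc => Rmin (rho i) acc) (rho d') (seq 0 d')
  end.

(* Main.v *)
Require Import Defs.
From Stdlib Require Import Reals Lra Lia List.
From Coquelicot Require Import Coquelicot.
Open Scope R_scope.

Definition w (a : nat) := beta_integrand a a.

Lemma w_cont a x : continuous (w a) x.
Proof. apply continuity_pt_filterlim, beta_integrand_continuous. Qed.

Lemma w_ex a u v : ex_RInt (w a) u v.
Proof. apply (@ex_RInt_continuous R_CompleteNormedModule); intros; apply w_cont. Qed.

Lemma w_sym a t : w a (1 - t) = w a t.
Proof. unfold w, beta_integrand. replace (1 - (1 - t)) with t by ring. ring. Qed.

Lemma w_nonneg a t : 0 <= t <= 1 -> 0 <= w a t.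
Proof. intros. unfold w, beta_integrand. apply Rmult_le_pos; apply pow_le; lra. Qed.

Lemma sym a p : RInt (w a) 0 (1 - p) = RInt (w a) p 1.
Proof.
  pose proof (@RInt_comp_lin R_CompleteNormedModule (w a) (-1) 1 p 1) as H.
  rewrite (RInt_ext _ (fun y => scal (-1) (w a y))) in H.
  2:{ intros x _. f_equal. rewrite <- (w_sym a x). f_equal. ring. }
  rewrite (@RInt_scal R_CompleteNormedModule) in H by apply w_ex.
  replace (-1 * p + 1) with (1 - p) in H by ring.
  replace (-1 * 1 + 1) with 0 in H by ring.
  specialize (H (w_ex _ _ _)).
  assert (E1 : RInt (w a) (1-p) 0 = - RInt (w a) 0 (1-p)).
  { rewrite <- opp_RInt_swap by apply w_ex. reflexivity. }
  rewrite E1 in H. unfold scal in H; simpl in H; unfold mult in H; simpl in H. lra.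
Qed.

Definition inner (q v : R) := q^2 + (2*v-1)^2*(1-q^2).
Definition gg (q v : R) := (1 + sqrt (inner q v)) / 2.
Definition dg (q v : R) := (2*v-1)*(1-q^2) / sqrt (inner q v).

Lemma inner_pos q v : 0 < q <= 1 -> 0 < inner q v.
Proof. intros. unfold inner. assert (0 <= (2*v-1)^2*(1-q^2)). apply Rmult_le_pos. apply pow2_ge_0. nra. nra. Qed.

Lemma gg_der q v : 0 < q <= 1 -> is_derive (gg q) v (dg q v).
Proof.
  intros Hq. pose proof (inner_pos q v Hq). unfold gg, dg.
  assert (0 < sqrt (inner q v)) by (apply sqrt_lt_R0; auto).
  unfold inner in *. auto_derive. { exact H. }
  simpl in *. set (S := sqrt _) in *. field. lra.
Qed.

Lemma dg_cont q v : 0 < q <= 1 -> continuous (dg q) v.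
Proof.
  intros Hq. apply (@ex_derive_continuous R_AbsRing R_NormedModule). pose proof (inner_pos q v Hq). unfold dg.
  assert (0 < sqrt (inner q v)) by (apply sqrt_lt_R0; auto).
  unfold inner in *. auto_derive. split; [nra|]. split; [apply Rgt_not_eq, sqrt_lt_R0; nra|auto].
Qed.

Lemma wS k t : w (S k) t = (t * (1 - t)) ^ k.
Proof. unfold w, beta_integrand. simpl. rewrite Nat.sub_0_r. rewrite Rpow_mult_distr. reflexivity. Qed.

Lemma pointwise k q v : 0 < q <= 1 -> 1/2 < v < 1 ->
  dg q v * w (S k) (gg q v) <= (1 - q^2) ^ S k * w (S k) v.
Proof.
  intros Hq Hv. rewrite !wS.
  pose proof (inner_pos q v Hq) as Hi.
  pose proof (sqrt_sqrt (inner q v) (Rlt_le _ _ Hi)) as Hs.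
  assert (Hsp : 0 < sqrt (inner q v)) by (apply sqrt_lt_R0; auto).
  assert (E : gg q v * (1 - gg q v) = (1 - q^2) * (v * (1 - v))).
  { unfold gg. set (s := sqrt (inner q v)) in *. unfold inner in Hs.
    replace ((1 + s) / 2 * (1 - (1 + s) / 2)) with ((1 - s*s)/4) by field.
    rewrite Hs. field. }
  rewrite E, Rpow_mult_distr.
  assert (Hle : 2*v - 1 <= sqrt (inner q v)).
  { rewrite <- (sqrt_pow2 (2*v-1)) by lra. apply sqrt_le_1_alt. unfold inner. assert ((2*v-1)^2 <= 1) by nra. assert (0 <= q^2) by nra. nra. }
  assert (H0 : 0 <= dg q v <= 1 - q^2).
  { unfold dg. split.
    - apply Rmult_le_pos. apply Rmult_le_pos; nra. left; apply Rinv_0_lt_compat; auto.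
    - unfold Rdiv. rewrite Rmult_comm, <- Rmult_assoc. rewrite <- (Rmult_1_l (1 - q^2)) at 2.
      apply Rmult_le_compat_r. nra. apply (Rmult_le_reg_l (sqrt (inner q v))); auto.
      rewrite <- Rmult_assoc, Rinv_r by lra. lra. }
  assert (0 <= (1 - q^2)^k) by (apply pow_le; nra).
  assert (0 <= (v * (1 - v))^k) by (apply pow_le; nra).
  assert (0 <= (1 - q^2)^k * (v*(1-v))^k) by (apply Rmult_le_pos; auto).
  replace ((1 - q^2)^S k * (v*(1-v))^k) with ((1-q^2) * ((1-q^2)^k * (v*(1-v))^k)) by (simpl; ring).
  apply Rmult_le_compat_r; [auto | lra].
Qed.

Lemma key k q : 0 < q <= 1 ->
  RInt (w (S k)) ((1+q)/2) 1 <= (1 - q^2) ^ S k * RInt (w (S k)) (1/2) 1.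
Proof.
  intros Hq.
  assert (E1 : gg q (1/2) = (1+q)/2).
  { unfold gg, inner. replace (q ^ 2 + (2 * (1 / 2) - 1) ^ 2 * (1 - q ^ 2)) with (q^2) by field.
    rewrite sqrt_pow2 by lra. reflexivity. }
  assert (E2 : gg q 1 = 1).
  { unfold gg, inner. replace (q ^ 2 + (2 * 1 - 1) ^ 2 * (1 - q ^ 2)) with 1 by ring.
    rewrite sqrt_1. field. }
  assert (Eq: RInt (w (S k)) ((1+q)/2) 1 = RInt (w (S k)) (gg q (1/2)) (gg q 1)) by (rewrite E1, E2; reflexivity).
  rewrite Eq.
  rewrite <- (@RInt_comp R_CompleteNormedModule (w (S k)) (gg q) (dg q)).
  2:{ intros; apply w_cont. }
  2:{ intros; split; [apply gg_der | apply dg_cont]; auto. }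
  rewrite <- (@RInt_scal R_CompleteNormedModule (w (S k))) by apply w_ex.
  apply RInt_le. lra.
  - apply (@ex_RInt_continuous R_CompleteNormedModule). intros z _.
    apply (@continuous_scal R_UniformSpace R_AbsRing R_NormedModule). apply dg_cont; auto.
    apply (@continuous_comp R_UniformSpace R_UniformSpace R_UniformSpace (gg q) (w (S k))).
    apply (@ex_derive_continuous R_AbsRing R_NormedModule). eexists; apply gg_der; auto.
    apply w_cont.
  - apply (@ex_RInt_continuous R_CompleteNormedModule). intros z _.
    apply (@continuous_scal R_UniformSpace R_AbsRing R_NormedModule). apply continuous_const. apply w_cont.
  - intros v Hv. unfold scal; simpl; unfold mult; simpl. apply pointwise; auto.
Qed.

Lemma exp_pow_INR x n : exp x ^ n = exp (x * INR n).
Proof.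
  induction n as [|n IH]. simpl. rewrite Rmult_0_r, exp_0. reflexivity.
  rewrite S_INR. simpl. rewrite IH, <- exp_plus. f_equal. ring.
Qed.

Lemma coord a p : (1 <= a)%nat -> 1/2 < p <= 1 ->
  1 - exp (- ((2 * p - 1) ^ 2 * INR a)) <= 2 * reg_inc_beta p a a - 1 <= 1.
Proof.
  intros Ha Hp. destruct a as [|k]. lia.
  unfold reg_inc_beta, beta_inc.
  rewrite <- !RInt_Reals. fold (w (S k)).
  set (q := 2*p - 1).
  assert (Hq : 0 < q <= 1) by (unfold q; lra).
  pose proof (key k q Hq) as K. replace ((1+q)/2) with p in K by (unfold q; field).
  assert (C1 : RInt (w (S k)) 0 p + RInt (w (S k)) p 1 = RInt (w (S k)) 0 1).
  { rewrite <- (@RInt_Chasles R_CompleteNormedModule (w (S k)) 0 p 1) by apply w_ex. reflexivity. }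
  assert (C2 : RInt (w (S k)) 0 (1/2) + RInt (w (S k)) (1/2) 1 = RInt (w (S k)) 0 1).
  { rewrite <- (@RInt_Chasles R_CompleteNormedModule (w (S k)) 0 (1/2) 1) by apply w_ex. reflexivity. }
  assert (C3 : RInt (w (S k)) 0 (1/2) = RInt (w (S k)) (1/2) 1).
  { rewrite <- sym. f_equal. field. }
  assert (Hpos : 0 < RInt (w (S k)) (1/2) 1).
  { apply RInt_gt_0. lra. intros x Hx. rewrite wS. apply pow_lt. nra.
    intros; apply w_cont. }
  assert (Rnn : 0 <= RInt (w (S k)) p 1).
  { apply RInt_ge_0. lra. apply w_ex. intros; apply w_nonneg; lra. }
  set (H := RInt (w (S k)) (1/2) 1) in *.
  set (R := RInt (w (S k)) p 1) in *.
  set (B := RInt (w (S k)) 0 p) in *.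
  rewrite <- C1. rewrite C3 in C2.
  assert (Ee : (1 - q^2) ^ S k <= exp (- (q ^ 2 * INR (S k)))).
  { replace (- (q ^ 2 * INR (S k))) with ((- q^2) * INR (S k)) by ring.
    rewrite <- exp_pow_INR. apply pow_incr. split. nra.
    pose proof (exp_ineq1_le (- q^2)). lra. }
  assert (B + R = 2 * H) by lra.
  assert (R / H <= (1 - q^2) ^ S k).
  { apply (Rmult_le_reg_r H); auto. unfold Rdiv. rewrite Rmult_assoc, Rinv_l by lra. lra. }
  assert (0 <= R / H). { apply Rdiv_le_0_compat; lra. }
  replace (B / (B + R)) with (1 - (R/H)/2).
  2:{ rewrite H0. replace B with (2*H - R) by lra. field. lra. }
  split; lra.
Qed.

Lemma fold_le (L : list nat) (f g : nat -> R) :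
  (forall i, In i L -> f i <= g i) ->
  fold_right (fun i acc => f i + acc) 0 L <= fold_right (fun i acc => g i + acc) 0 L.
Proof.
  induction L as [|x L IH]; intros Hfg; simpl. lra.
  apply Rplus_le_compat. apply Hfg; left; auto. apply IH; intros; apply Hfg; right; auto.
Qed.

Lemma fold_scal (L : list nat) (c : R) (f : nat -> R) :
  fold_right (fun i acc => c * f i + acc) 0 L = c * fold_right (fun i acc => f i + acc) 0 L.
Proof. induction L as [|x L IH]; simpl. ring. rewrite IH. ring. Qed.

Lemma fmin_le (r : nat -> R) z L :
  fold_right (fun i acc => Rmin (r i) acc) z L <= z /\
  (forall i, In i L -> fold_right (fun i acc => Rmin (r i) acc) z L <= r i).
Proof.
  induction L as [|x L [IH1 IH2]]; simpl. split. lra. intros i [].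
  split. eapply Rle_trans. apply Rmin_r. auto.
  intros i [<-|Hi]. apply Rmin_l. eapply Rle_trans. apply Rmin_r. auto.
Qed.

Lemma fmin_gt (r : nat -> R) z L c :
  c < z -> (forall i, In i L -> c < r i) ->
  c < fold_right (fun i acc => Rmin (r i) acc) z L.
Proof.
  induction L as [|x L IH]; simpl; intros Hz HL. auto.
  apply Rmin_glb_lt. apply HL; auto. apply IH; auto.
Qed.

Lemma rho_min_prop d r : (forall i, (i < d)%nat -> 1/2 < r i <= 1) ->
  forall i, (i < d)%nat -> 1/2 < rho_min d r <= r i.
Proof.
  intros Hr i Hi. destruct d as [|d']. lia. simpl.
  split.
  - apply fmin_gt. apply Hr; lia. intros j Hj. apply in_seq in Hj. apply Hr; lia.
  - destruct (fmin_le r (r d') (seq 0 d')) as [H1 H2].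
    destruct (Nat.eq_dec i d') as [->|Hne]. auto.
    apply H2. apply in_seq. lia.
Qed.

Theorem mainTheorem5 (d M : nat)
  (g rho : (nat -> R) -> nat -> R) (x : nat -> R)
  (Hrho : forall i, (i < d)%nat -> 1/2 < rho x i <= 1)
  (HM : (1 <= M)%nat) :
  (1 - exp (- ((2 * rho_min d (rho x) - 1) ^ 2 * INR (lfloor M)))) * norm1 d (g x)
    <= norm_rhoM d M (rho x) (g x)
  /\ norm_rhoM d M (rho x) (g x) <= norm1 d (g x).
Proof.
  assert (Ha : (1 <= lfloor M)%nat).
  { unfold lfloor. apply (Nat.div_le_lower_bound _ 2); lia. }
  unfold norm1, norm_rhoM, fsum. rewrite <- fold_scal. split.
  - apply fold_le. intros i Hi. apply in_seq in Hi.
    apply Rmult_le_compat_r. apply Rabs_pos.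
    destruct (rho_min_prop d (rho x) Hrho i ltac:(lia)) as [Hm1 Hm2].
    destruct (coord (lfloor M) (rho x i) Ha (Hrho i ltac:(lia))) as [C1 C2].
    eapply Rle_trans; [|exact C1].
    apply Rplus_le_compat_l, Ropp_le_contravar.
    assert (E : - ((2 * rho x i - 1) ^ 2 * INR (lfloor M)) <=
                - ((2 * rho_min d (rho x) - 1) ^ 2 * INR (lfloor M))).
    { apply Ropp_le_contravar. apply Rmult_le_compat_r. apply pos_INR.
      apply pow_incr. lra. }
    destruct E as [E|E]. left; apply exp_increasing; auto. rewrite E; lra.
  - rewrite <- (Rmult_1_l (fold_right (fun i acc => Rabs (g x i) + acc) 0 (seq 0 d))).
    rewrite <- fold_scal.
    apply fold_le. intros i Hi. apply in_seq in Hi.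
    apply Rmult_le_compat_r. apply Rabs_pos.
    apply (coord (lfloor M) (rho x i) Ha (Hrho i ltac:(lia))).
Qed.
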